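(* Let $\langle P[(\bot_k\otimes R[x_i])⅋(x_j^\perp\otimes Q)]\mid x_i\odot x_j^\perp,\Gamma\rangle$ be a proof graph, where $x$ is an arbitrary atom or a unit, and $x^\perp$ its dual. Then $\langle P[\bot_k\otimes(R[x_i]⅋(x_j^\perp\otimes Q))]\mid x_i\odot x_j^\perp,\Gamma\rangle$ is equivalent to it.
   Context: Write ⅋ for par and $\odot$ for the cut connective. A proof graph $\langle P\mid\Gamma\rangle$ is an MLL linking tree $P$ (generated by $\mathsf1\mid a\otimes a^\perp\mid a^\perp\otimes a\mid\bot\otimes L\mid L\otimes\bot\mid L⅋L$) with a sequent $\Gamma$ (cuts $A\odot A^\perp$ allowed as roots) sharing the same leaves, such that every switching (deleting one child edge per ⅋-node; $\odot$ acts like $\otimes$) is connected and acyclic. Equivalence $\sim$ is generated by commutativity/associativity of ⅋ in the linking, commutativity of $\otimes$, $\bot_i\otimes(Q\otimes\bot_j)\sim(\bot_i\otimes Q)\otimes\bot_j$, and $Q⅋(R\otimes\bot_i)\sim(Q⅋R)\otimes\bot_i$ under the side condition that in every extended switching with respect to $\bot_i$ (switching with the edge from $\bot_i$ to its parent also removed) no node of $Q$ is connected to $\bot_i$. $P[\;],R[\;]$ are linking contexts, $Q$ a linking; indices distinguish leaf occurrences. *)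

(* Defs.v *)
From Stdlib Require Import List Bool Arith Permutation Relations.
Import ListNotations.

(* Pos a = atom a, Neg a = a^perp, One = 1, Bot = bot *)
Inductive lit : Type := Pos (a : nat) | Neg (a : nat) | One | Bot.

Definition dual_lit (x : lit) : lit :=
  match x with Pos a => Neg a | Neg a => Pos a | One => Bot | Bot => One end.

Definition atom_or_unit (x : lit) : Prop :=
  match x with Neg _ => False | _ => True end.

(* a leaf occurrence: a literal together with an index *)
Definition leaf : Type := (lit * nat)%type.

Inductive lk : Type :=
| LLeaf (l : leaf)
| LTens (A B : lk)
| LPar (A B : lk).

Inductive is_linking : lk -> Prop :=
| il_one i : is_linking (LLeaf (One, i))
| il_ax a i j : is_linking (LTens (LLeaf (Pos a, i)) (LLeaf (Neg a, j)))
| il_xa a i j : is_linking (LTens (LLeaf (Neg a, i)) (LLeaf (Pos a, j)))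
| il_botl i L : is_linking L -> is_linking (LTens (LLeaf (Bot, i)) L)
| il_botr i L : is_linking L -> is_linking (LTens L (LLeaf (Bot, i)))
| il_par L M : is_linking L -> is_linking M -> is_linking (LPar L M).

Fixpoint lk_leaves (P : lk) : list leaf :=
  match P with
  | LLeaf l => [l]
  | LTens A B | LPar A B => lk_leaves A ++ lk_leaves B
  end.

Inductive ctx : Type :=
| Hole
| CTensL (C : ctx) (B : lk)
| CTensR (A : lk) (C : ctx)
| CParL (C : ctx) (B : lk)
| CParR (A : lk) (C : ctx).

Fixpoint plug (C : ctx) (X : lk) : lk :=
  match C with
  | Hole => X
  | CTensL C' B => LTens (plug C' X) B
  | CTensR A C' => LTens A (plug C' X)
  | CParL C' B => LPar (plug C' X) B
  | CParR A C' => LPar A (plug C' X)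
  end.

(* address of the hole (reversed path; false = left child, true = right) *)
Fixpoint hpath (C : ctx) (p : list bool) : list bool :=
  match C with
  | Hole => p
  | CTensL C' _ | CParL C' _ => hpath C' (false :: p)
  | CTensR _ C' | CParR _ C' => hpath C' (true :: p)
  end.

Inductive fm : Type :=
| FLit (l : leaf)
| FTens (A B : fm)
| FPar (A B : fm).

Fixpoint is_dual (A B : fm) : Prop :=
  match A, B with
  | FLit (x, _), FLit (y, _) => y = dual_lit x
  | FTens A1 A2, FPar B1 B2 => is_dual A1 B1 /\ is_dual A2 B2
  | FPar A1 A2, FTens B1 B2 => is_dual A1 B1 /\ is_dual A2 B2
  | _, _ => False
  end.

(* a sequent item: a formula, or a cut A (.) A^perp (only as a root) *)
Inductive item : Type :=
| IForm (A : fm)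
| ICut (A B : fm).

Definition sequent : Type := list item.

Definition wf_sequent (G : sequent) : Prop :=
  Forall (fun it => match it with IForm _ => True | ICut A B => is_dual A B end) G.

Fixpoint fm_leaves (A : fm) : list leaf :=
  match A with
  | FLit l => [l]
  | FTens A B | FPar A B => fm_leaves A ++ fm_leaves B
  end.

Definition item_leaves (it : item) : list leaf :=
  match it with IForm A => fm_leaves A | ICut A B => fm_leaves A ++ fm_leaves B end.

Definition seq_leaves (G : sequent) : list leaf := flat_map item_leaves G.

(* nodes: shared leaves, internal nodes of the linking (by address),
   internal nodes of the n-th sequent item (by address) *)
Inductive node : Type :=
| NLeaf (l : leaf)
| NLk (p : list bool)
| NSq (n : nat) (p : list bool).

Definition lit_eq_dec (x y : lit) : {x = y} + {x <> y}.
Proof. decide equality; apply Nat.eq_dec. Defined.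

Definition node_eq_dec (u v : node) : {u = v} + {u <> v}.
Proof.
  decide equality;
  try (apply list_eq_dec; apply bool_dec);
  try apply Nat.eq_dec.
  destruct l, l0; decide equality; try apply Nat.eq_dec; apply lit_eq_dec.
Defined.

(* labelled edge (child, parent, label); label = Some b iff the parent is a
   par node and the child is its left (b = false) / right (b = true) child *)
Definition ledge : Type := (node * node * option bool)%type.

Definition lk_root (p : list bool) (P : lk) : node :=
  match P with LLeaf l => NLeaf l | _ => NLk p end.

Fixpoint lk_edges (p : list bool) (P : lk) : list ledge :=
  match P with
  | LLeaf _ => []
  | LTens A B =>
      (lk_root (false :: p) A, NLk p, None) :: (lk_root (true :: p) B, NLk p, None)
        :: lk_edges (false :: p) A ++ lk_edges (true :: p) B
  | LPar A B =>
      (lk_root (false :: p) A, NLk p, Some false) :: (lk_root (true :: p) B, NLk p, Some true)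
        :: lk_edges (false :: p) A ++ lk_edges (true :: p) B
  end.

Fixpoint lk_nodes (p : list bool) (P : lk) : list node :=
  match P with
  | LLeaf l => [NLeaf l]
  | LTens A B | LPar A B => NLk p :: lk_nodes (false :: p) A ++ lk_nodes (true :: p) B
  end.

Definition fm_root (n : nat) (p : list bool) (A : fm) : node :=
  match A with FLit l => NLeaf l | _ => NSq n p end.

Fixpoint fm_edges (n : nat) (p : list bool) (A : fm) : list ledge :=
  match A with
  | FLit _ => []
  | FTens A1 A2 =>
      (fm_root n (false :: p) A1, NSq n p, None) :: (fm_root n (true :: p) A2, NSq n p, None)
        :: fm_edges n (false :: p) A1 ++ fm_edges n (true :: p) A2
  | FPar A1 A2 =>
      (fm_root n (false :: p) A1, NSq n p, Some false) :: (fm_root n (true :: p) A2, NSq n p, Some true)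
        :: fm_edges n (false :: p) A1 ++ fm_edges n (true :: p) A2
  end.

Fixpoint fm_nodes (n : nat) (p : list bool) (A : fm) : list node :=
  match A with
  | FLit l => [NLeaf l]
  | FTens A1 A2 | FPar A1 A2 => NSq n p :: fm_nodes n (false :: p) A1 ++ fm_nodes n (true :: p) A2
  end.

(* a cut acts like a tensor *)
Definition item_edges (n : nat) (it : item) : list ledge :=
  match it with
  | IForm A => fm_edges n [] A
  | ICut A B =>
      (fm_root n [false] A, NSq n [], None) :: (fm_root n [true] B, NSq n [], None)
        :: fm_edges n [false] A ++ fm_edges n [true] B
  end.

Definition item_nodes (n : nat) (it : item) : list node :=
  match it with
  | IForm A => fm_nodes n [] A
  | ICut A B => NSq n [] :: fm_nodes n [false] A ++ fm_nodes n [true] B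
  end.

Fixpoint seq_edges (n : nat) (G : sequent) : list ledge :=
  match G with [] => [] | it :: G' => item_edges n it ++ seq_edges (S n) G' end.

Fixpoint seq_nodes (n : nat) (G : sequent) : list node :=
  match G with [] => [] | it :: G' => item_nodes n it ++ seq_nodes (S n) G' end.

Definition pg_nodes (P : lk) (G : sequent) : list node := lk_nodes [] P ++ seq_nodes 0 G.
Definition pg_edges (P : lk) (G : sequent) : list ledge := lk_edges [] P ++ seq_edges 0 G.

(* a switching chooses, for every par node p, which child edge to keep
   (s p = false: keep the left one; true: keep the right one) *)
Definition switching : Type := node -> bool.

Definition kept (s : switching) (e : ledge) : bool :=
  match e with
  | (_, p, None) => true
  | (_, p, Some b) => Bool.eqb b (s p)
  end.

Definition sw_edges (s : switching) (E : list ledge) : list (node * node) :=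
  map (fun e => (fst (fst e), snd (fst e))) (filter (kept s) E).

Inductive walk (E : list (node * node)) : node -> node -> Prop :=
| walk_refl u : walk E u u
| walk_step u v w : (In (u, v) E \/ In (v, u) E) -> walk E v w -> walk E u w.

Definition connected (V : list node) (E : list (node * node)) : Prop :=
  forall u v, In u V -> In v V -> walk E u v.

Fixpoint trail (E : list (node * node)) (u v : node) (idx : list nat) : Prop :=
  match idx with
  | [] => u = v
  | k :: r => exists w, (nth_error E k = Some (u, w) \/ nth_error E k = Some (w, u))
                        /\ trail E w v r
  end.

Definition acyclic (E : list (node * node)) : Prop :=
  ~ exists u idx, idx <> [] /\ NoDup idx /\ trail E u u idx.

Definition proof_graph (P : lk) (G : sequent) : Prop :=
  is_linking P /\ wf_sequent G /\
  NoDup (lk_leaves P) /\ Permutation (lk_leaves P) (seq_leaves G) /\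
  forall s : switching,
    connected (pg_nodes P G) (sw_edges s (pg_edges P G)) /\
    acyclic (sw_edges s (pg_edges P G)).

(* extended switching w.r.t. bot_i: additionally remove the edge from the leaf
   bot_i to its parent in the linking *)
Definition ext_sw_edges (s : switching) (i : nat) (P : lk) (G : sequent)
  : list (node * node) :=
  sw_edges s (filter (fun e => if node_eq_dec (fst (fst e)) (NLeaf (Bot, i))
                               then false else true) (lk_edges [] P))
  ++ sw_edges s (seq_edges 0 G).

(* side condition of  Q par (R (x) bot_i) ~ (Q par R) (x) bot_i  in context C:
   in every extended switching w.r.t. bot_i of <C[Q par (R (x) bot_i)] | G>,
   no node of Q is connected to bot_i *)
Definition rewire_side (C : ctx) (Q R : lk) (i : nat) (G : sequent) : Prop :=
  forall (s : switching) (u : node),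
    In u (lk_nodes (false :: hpath C []) Q) ->
    ~ walk (ext_sw_edges s i (plug C (LPar Q (LTens R (LLeaf (Bot, i))))) G) u (NLeaf (Bot, i)).

Inductive lk_step (G : sequent) : lk -> lk -> Prop :=
| st_parC C A B : lk_step G (plug C (LPar A B)) (plug C (LPar B A))
| st_parA C A B D : lk_step G (plug C (LPar A (LPar B D))) (plug C (LPar (LPar A B) D))
| st_tensC C A B : lk_step G (plug C (LTens A B)) (plug C (LTens B A))
| st_botA C Q i j :
    lk_step G (plug C (LTens (LLeaf (Bot, i)) (LTens Q (LLeaf (Bot, j)))))
              (plug C (LTens (LTens (LLeaf (Bot, i)) Q) (LLeaf (Bot, j))))
| st_rewire C Q R i :
    rewire_side C Q R i G ->
    lk_step G (plug C (LPar Q (LTens R (LLeaf (Bot, i)))))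
              (plug C (LTens (LPar Q R) (LLeaf (Bot, i)))).

Definition pgraph : Type := (lk * sequent)%type.

Definition pg_step (X Y : pgraph) : Prop :=
  snd X = snd Y /\ proof_graph (fst X) (snd X) /\ proof_graph (fst Y) (snd Y) /\
  lk_step (snd X) (fst X) (fst Y).

Definition pg_equiv : pgraph -> pgraph -> Prop := clos_refl_sym_trans pgraph pg_step.

(* Main.v *)
Require Import Defs.
From Stdlib Require Import List Bool Arith Permutation Relations Lia Classical.
Import ListNotations.

Lemma walk_trans E u v w : walk E u v -> walk E v w -> walk E u w.
Proof. induction 1; intros; auto. econstructor; eauto. Qed.

Lemma walk_edge E u v : In (u,v) E -> walk E u v.
Proof. intros; econstructor; [left; eauto | constructor]. Qed.

Lemma walk_sym E u v : walk E u v -> walk E v u.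
Proof.
  induction 1. constructor.
  apply walk_trans with v; auto. econstructor; [|constructor]. tauto.
Qed.

Lemma walk_sub E E' : (forall u v, In (u,v) E -> walk E' u v) ->
  forall x y, walk E x y -> walk E' x y.
Proof.
  intros H x y W; induction W. constructor.
  apply walk_trans with v; auto. destruct H0; [apply H|apply walk_sym, H]; auto.
Qed.

Lemma walk_incl E E' : incl E E' -> forall x y, walk E x y -> walk E' x y.
Proof. intros I; apply walk_sub; intros; apply walk_edge; auto. Qed.

Lemma walk_closed E (P : node -> Prop) :
  (forall u v, In (u,v) E -> (P u <-> P v)) -> forall x y, walk E x y -> P x -> P y.
Proof.
  intros H x y W; induction W; auto. intros; apply IHW.
  destruct H0 as [H0|H0]; apply H in H0; tauto.
Qed.

Lemma trail_app E u v w i1 i2 : trail E u v i1 -> trail E v w i2 -> trail E u w (i1 ++ i2).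
Proof.
  revert u; induction i1; simpl; intros u H1 H2. subst; auto.
  destruct H1 as [x [Hx Ht]]. exists x; split; eauto.
Qed.

Lemma trail_split E u w i1 i2 : trail E u w (i1 ++ i2) -> exists v, trail E u v i1 /\ trail E v w i2.
Proof.
  revert u; induction i1; simpl; intros u H. exists u; simpl; auto.
  destruct H as [x [Hx Ht]]. destruct (IHi1 _ Ht) as [v [A B]]. exists v; split; auto.
  exists x; auto.
Qed.

Lemma trail_walk E u v idx : trail E u v idx -> walk E u v.
Proof.
  revert u; induction idx; simpl; intros u H. subst; constructor.
  destruct H as [x [Hx Ht]]. apply walk_step with x; auto.
  destruct Hx; [left|right]; eapply nth_error_In; eauto.
Qed.

Lemma walk_trail E u v : walk E u v -> exists idx, NoDup idx /\ trail E u v idx.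
Proof.
  induction 1 as [u|u v w Huv W [idx [ND T]]].
  - exists []; split; [constructor|reflexivity].
  - assert (exists k, nth_error E k = Some (u,v) \/ nth_error E k = Some (v,u)) as [k Hk].
    { destruct Huv as [H|H]; apply In_nth_error in H as [k Hk]; exists k; auto. }
    destruct (in_dec Nat.eq_dec k idx) as [Hin|Hnin].
    + apply in_split in Hin as [i1 [i2 ->]].
      apply trail_split in T as [y [T1 T2]]. simpl in T2. destruct T2 as [z [Hz T2]].
      assert ((y = u /\ z = v) \/ (y = v /\ z = u)) as Hyz.
      { destruct Hk as [Hk|Hk]; destruct Hz as [Hz|Hz]; rewrite Hk in Hz; inversion Hz; subst; auto. }
      pose proof (NoDup_remove_2 _ _ _ ND) as ND'.
      pose proof (NoDup_remove_1 _ _ _ ND) as ND1.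
      apply NoDup_app_remove_l in ND1.
      destruct Hyz as [[-> ->]|[-> ->]].
      * exists (k :: i2). split. constructor; auto. intro; apply ND'; apply in_or_app; auto.
        simpl. exists v; auto.
      * exists i2; auto.
    + exists (k :: idx). split. constructor; auto. simpl. exists v; auto.
Qed.

Lemma NoDup_map_inj_in {A B} (f : A -> B) l :
  (forall x y, In x l -> In y l -> f x = f y -> x = y) -> NoDup l -> NoDup (map f l).
Proof.
  induction l as [|a l IH]; simpl; intros Hi ND. constructor.
  inversion ND; subst. constructor.
  - intro H. apply in_map_iff in H as [y [Hy Iy]]. apply Hi in Hy; auto. subst; auto.
  - apply IH; auto.
Qed.

Lemma trail_shift e E u v idx : trail E u v idx -> trail (e::E) u v (map S idx).
Proof. revert u; induction idx; simpl; auto. intros u [x [Hx Ht]]; exists x; auto. Qed.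

Lemma cyc1 u v E : acyclic ((u,v)::E) -> ~ walk E u v.
Proof.
  intros A W. apply walk_sym, walk_trail in W as [idx [ND T]].
  apply A. exists u, (0 :: map S idx). split; [discriminate|split].
  - constructor. intro H; apply in_map_iff in H as [x [H _]]; discriminate.
    apply NoDup_map_inj_in; auto.
  - simpl. exists v. split; auto. apply trail_shift; auto.
Qed.

Lemma acyclic_tail e E : acyclic (e::E) -> acyclic E.
Proof.
  intros A [u [idx [Hne [ND T]]]]. apply A. exists u, (map S idx).
  split; [destruct idx; simpl; congruence|split].
  apply NoDup_map_inj_in; auto; intros; lia. apply trail_shift; auto.
Qed.

Lemma trail_unshift e E u v idx : ~ In 0 idx -> trail (e::E) u v idx -> trail E u v (map pred idx).
Proof.
  revert u; induction idx as [|k idx IH]; simpl; auto. intros u Hn [x [Hx Ht]].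
  exists x. split; [|apply IH; auto].
  destruct k; [exfalso; auto|]. simpl in Hx. exact Hx.
Qed.

Lemma acyclic_add u v E : acyclic E -> ~ walk E u v -> acyclic ((u,v)::E).
Proof.
  intros A Nw [x [idx [Hne [ND T]]]].
  destruct (in_dec Nat.eq_dec 0 idx) as [Hin|Hnin].
  - apply in_split in Hin as [i1 [i2 ->]].
    apply trail_split in T as [y [T1 T2]]. simpl in T2. destruct T2 as [z [Hz T2]].
    assert (T3 : trail ((u,v)::E) z y (i2 ++ i1)) by (eapply trail_app; eauto).
    pose proof (NoDup_remove_2 _ _ _ ND) as H0.
    apply (trail_unshift (u,v)) in T3;
      [|intro H; apply H0; apply in_app_or in H; apply in_or_app; tauto].
    apply trail_walk in T3.
    apply Nw. destruct Hz as [Hz|Hz]; inversion Hz; subst;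
      first [exact T3 | apply walk_sym; exact T3].
  - apply A. exists x, (map pred idx). split; [destruct idx; simpl; congruence|split].
    + apply NoDup_map_inj_in; auto. intros a b Ha Hb E'.
      destruct a; [contradiction|]; destruct b; [contradiction|]. simpl in E'; lia.
    + apply (trail_unshift (u,v)); auto.
Qed.

Lemma perm_index {A} (l l' : list A) : Permutation l l' ->
  exists f, (forall k x, nth_error l' k = Some x -> nth_error l (f k) = Some x) /\
            (forall k1 k2, k1 < length l' -> k2 < length l' -> f k1 = f k2 -> k1 = k2).
Proof.
  induction 1 as [|x l l' P [f [F1 F2]]|x y l|l l' l'' P1 [f1 [F1 G1]] P2 [f2 [F2 G2]]].
  - exists (fun k => k). split; intros; simpl in *; auto; lia.
  - exists (fun k => match k with 0 => 0 | S k => S (f k) end). split.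
    + intros [|k] z H; simpl in *; auto.
    + intros [|k1] [|k2]; simpl; intros; try discriminate; auto.
      f_equal; apply F2; try lia; congruence.
  - exists (fun k => match k with 0 => 1 | 1 => 0 | k => k end). split.
    + intros [|[|k]] z H; simpl in *; auto.
    + intros [|[|k1]] [|[|k2]]; simpl; intros; lia.
  - exists (fun k => f1 (f2 k)). split.
    + intros k x H; apply F1, F2, H.
    + intros k1 k2 H1 H2 E.
      assert (L : forall k, k < length l'' -> f2 k < length l').
      { intros k Hk. apply nth_error_Some in Hk.
        destruct (nth_error l'' k) eqn:Ek; [|congruence].
        apply F2 in Ek. apply nth_error_Some. congruence. }
      apply G2; auto.
Qed.

Lemma trail_idx_lt E u v idx : trail E u v idx -> forall k, In k idx -> k < length E.
Proof.
  revert u; induction idx; simpl; intros u H k Hk. contradiction.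
  destruct H as [x [Hx Ht]]. destruct Hk as [<-|Hk]; eauto.
  apply nth_error_Some. destruct Hx; congruence.
Qed.

Lemma trail_perm f E E' u v idx :
  (forall k x, nth_error E' k = Some x -> nth_error E (f k) = Some x) ->
  trail E' u v idx -> trail E u v (map f idx).
Proof.
  intros F; revert u; induction idx; simpl; auto.
  intros u [x [Hx Ht]]. exists x. split; auto. destruct Hx; [left|right]; auto.
Qed.

Lemma acyclic_perm E E' : Permutation E E' -> acyclic E -> acyclic E'.
Proof.
  intros P A [u [idx [Hne [ND T]]]]. destruct (perm_index _ _ P) as [f [F1 F2]].
  apply A. exists u, (map f idx). split; [destruct idx; simpl; congruence|split].
  - apply NoDup_map_inj_in; auto. intros; apply F2; auto; eapply trail_idx_lt; eauto.
  - eapply trail_perm; eauto.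
Qed.

Definition pmap (f : node -> node) (e : node * node) := (f (fst e), f (snd e)).

Lemma trail_unmap f g E x y idx : (forall x, g (f x) = x) ->
  trail (map (pmap f) E) x y idx -> trail E (g x) (g y) idx.
Proof.
  intros Hg; revert x; induction idx as [|k r IH]; simpl; intros x H. subst; auto.
  destruct H as [w [Hw Ht]]. exists (g w). split; auto.
  rewrite !nth_error_map in Hw.
  destruct (nth_error E k) as [[a b]|]; simpl in Hw; [|destruct Hw; discriminate].
  unfold pmap in Hw; simpl in Hw.
  destruct Hw as [Hw|Hw]; inversion Hw; subst; rewrite !Hg; auto.
Qed.

Lemma acyclic_map f g E : (forall x, g (f x) = x) -> acyclic E -> acyclic (map (pmap f) E).
Proof.
  intros Hg A [u [idx [Hne [ND T]]]]. apply A. exists (g u), idx. repeat split; auto.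
  eapply trail_unmap; eauto.
Qed.

Lemma walk_map f E u v : walk E u v -> walk (map (pmap f) E) (f u) (f v).
Proof.
  induction 1. constructor. apply walk_step with (f v); auto.
  destruct H; [left|right]; apply (in_map (pmap f)) in H; exact H.
Qed.

Lemma sw_app s E1 E2 : sw_edges s (E1 ++ E2) = sw_edges s E1 ++ sw_edges s E2.
Proof. unfold sw_edges. rewrite filter_app, map_app; auto. Qed.

Lemma sw_perm s E E' : Permutation E E' -> Permutation (sw_edges s E) (sw_edges s E').
Proof.
  unfold sw_edges. intros P. apply Permutation_map.
  induction P; simpl; auto.
  - destruct (kept s x); auto.
  - destruct (kept s x), (kept s y); auto. constructor.
  - eapply perm_trans; eauto.
Qed.

Lemma sw_in s E u v : In (u,v) (sw_edges s E) <-> exists l, In (u,v,l) E /\ kept s (u,v,l) = true.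
Proof.
  unfold sw_edges. rewrite in_map_iff. split.
  - intros [[[a b] l] [H1 H2]]. simpl in H1. inversion H1; subst.
    apply filter_In in H2. exists l; tauto.
  - intros [l [H1 H2]]. exists (u,v,l). split; auto. apply filter_In; auto.
Qed.

Lemma sw_agree s s' E : (forall e, In e E -> s (snd (fst e)) = s' (snd (fst e))) ->
  sw_edges s E = sw_edges s' E.
Proof.
  unfold sw_edges. intros H. f_equal. induction E as [|[[c p] l] E IH]; cbn -[kept]; auto.
  assert (kept s (c,p,l) = kept s' (c,p,l)) as ->.
  { destruct l; simpl; auto. specialize (H (c,p,Some b)); simpl in H; rewrite H; auto. }
  rewrite IH; auto. intros; apply H; simpl; auto.
Qed.

Definition renE (phi : node -> node) (fl : node -> bool) (e : ledge) : ledge :=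
  let '(c, p, l) := e in (phi c, phi p, if fl p then option_map negb l else l).

Lemma kept_ren s phi fl e :
  kept s (renE phi fl e) = kept (fun v => xorb (fl v) (s (phi v))) e.
Proof.
  destruct e as [[c p] [b|]]; simpl; destruct (fl p); simpl; try destruct b; destruct (s (phi p)); reflexivity.
Qed.

Lemma sw_ren s phi fl E :
  sw_edges s (map (renE phi fl) E) = map (pmap phi) (sw_edges (fun v => xorb (fl v) (s (phi v))) E).
Proof.
  unfold sw_edges. induction E as [|e E IH]; cbn -[kept renE]; auto.
  rewrite kept_ren. destruct (kept _ e); simpl; auto.
  rewrite IH. f_equal. destruct e as [[c p] l]; reflexivity.
Qed.

Definition TreeProp (V : list node) (E : list ledge) :=
  forall s, connected V (sw_edges s E) /\ acyclic (sw_edges s E).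

Lemma tree_iso V1 E1 V2 E2 phi psi fl :
  (forall x, psi (phi x) = x) ->
  Permutation E2 (map (renE phi fl) E1) ->
  incl V2 (map phi V1) ->
  TreeProp V1 E1 -> TreeProp V2 E2.
Proof.
  intros Hps P I T s. set (s1 := fun v => xorb (fl v) (s (phi v))).
  destruct (T s1) as [C A].
  assert (P2 : Permutation (map (pmap phi) (sw_edges s1 E1)) (sw_edges s E2)).
  { unfold s1; rewrite <- sw_ren. apply Permutation_sym, sw_perm; auto. }
  split.
  - intros u v Hu Hv. apply I in Hu, Hv. apply in_map_iff in Hu as [u0 [<- Hu]].
    apply in_map_iff in Hv as [v0 [<- Hv]].
    apply walk_incl with (map (pmap phi) (sw_edges s1 E1)).
    intros x Hx; eapply Permutation_in; eauto.
    apply walk_map, C; auto.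
  - eapply acyclic_perm; [exact P2|]. eapply acyclic_map; eauto.
Qed.

Definition croot (C : ctx) (p : list bool) (r : node) : node :=
  match C with Hole => r | _ => NLk p end.

Fixpoint ctx_edges (C : ctx) (p : list bool) (r : node) : list ledge :=
  match C with
  | Hole => []
  | CTensL C' B => (croot C' (false::p) r, NLk p, None) :: (lk_root (true::p) B, NLk p, None)
                     :: ctx_edges C' (false::p) r ++ lk_edges (true::p) B
  | CTensR A C' => (lk_root (false::p) A, NLk p, None) :: (croot C' (true::p) r, NLk p, None)
                     :: lk_edges (false::p) A ++ ctx_edges C' (true::p) r
  | CParL C' B => (croot C' (false::p) r, NLk p, Some false) :: (lk_root (true::p) B, NLk p, Some true)
                     :: ctx_edges C' (false::p) r ++ lk_edges (true::p) B
  | CParR A C' => (lk_root (false::p) A, NLk p, Some false) :: (croot C' (true::p) r, NLk p, Some true)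
                     :: lk_edges (false::p) A ++ ctx_edges C' (true::p) r
  end.

Fixpoint ctx_nodes (C : ctx) (p : list bool) : list node :=
  match C with
  | Hole => []
  | CTensL C' B | CParL C' B => NLk p :: ctx_nodes C' (false::p) ++ lk_nodes (true::p) B
  | CTensR A C' | CParR A C' => NLk p :: lk_nodes (false::p) A ++ ctx_nodes C' (true::p)
  end.

Lemma root_plug C p X : lk_root p (plug C X) = croot C p (lk_root (hpath C p) X).
Proof. destruct C; reflexivity. Qed.

Lemma edges_plug C p X : Permutation (lk_edges p (plug C X))
  (ctx_edges C p (lk_root (hpath C p) X) ++ lk_edges (hpath C p) X).
Proof.
  revert p; induction C; intros p; simpl; try rewrite !root_plug; auto;
  try (do 2 constructor; rewrite IHC; rewrite <- !app_assoc;
       first [apply Permutation_app_head, Permutation_app_comm | reflexivity]).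
Qed.

Lemma nodes_plug C p X : Permutation (lk_nodes p (plug C X))
  (ctx_nodes C p ++ lk_nodes (hpath C p) X).
Proof.
  revert p; induction C; intros p; simpl; auto;
  try (constructor; rewrite IHC; rewrite <- !app_assoc;
       first [apply Permutation_app_head, Permutation_app_comm | reflexivity]).
Qed.

Lemma leaves_plug C X Y : Permutation (lk_leaves X) (lk_leaves Y) ->
  Permutation (lk_leaves (plug C X)) (lk_leaves (plug C Y)).
Proof.
  intros H; induction C; simpl; auto; first [apply Permutation_app_tail | apply Permutation_app_head]; auto.
Qed.

Lemma nodup_plug C X : NoDup (lk_leaves (plug C X)) -> NoDup (lk_leaves X).
Proof.
  induction C; simpl; auto; intros H; apply IHC;
  first [exact (NoDup_app_remove_r _ _ H) | exact (NoDup_app_remove_l _ _ H)].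
Qed.

Lemma in_leaves_plug C X l : In l (lk_leaves X) -> In l (lk_leaves (plug C X)).
Proof. induction C; simpl; auto; intros; apply in_or_app; auto. Qed.


Definition isLeafb (X : lk) : bool := match X with LLeaf _ => true | _ => false end.

Lemma plug_notleaf C X : isLeafb X = false -> isLeafb (plug C X) = false.
Proof. destruct C; simpl; auto. Qed.

Lemma tens_inv_l A B : is_linking (LTens A B) -> isLeafb A = false ->
  is_linking A /\ exists i, B = LLeaf (Bot, i).
Proof. intros H HA; inversion H; subst; simpl in HA; try discriminate; eauto. Qed.

Lemma tens_inv_r A B : is_linking (LTens A B) -> isLeafb B = false ->
  is_linking B /\ exists i, A = LLeaf (Bot, i).
Proof. intros H HA; inversion H; subst; simpl in HA; try discriminate; eauto. Qed.

Lemma par_inv A B : is_linking (LPar A B) -> is_linking A /\ is_linking B.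
Proof. intros H; inversion H; subst; auto. Qed.

Lemma linking_plug C X Y : isLeafb X = false ->
  (is_linking X -> is_linking Y) -> is_linking (plug C X) -> is_linking (plug C Y).
Proof.
  intros HX HL; induction C; simpl; auto; intros H.
  - apply tens_inv_l in H as [H1 [i ->]]; [|apply plug_notleaf; auto]. constructor; auto.
  - apply tens_inv_r in H as [H1 [i ->]]; [|apply plug_notleaf; auto]. constructor; auto.
  - apply par_inv in H as [H1 H2]. constructor; auto.
  - apply par_inv in H as [H1 H2]. constructor; auto.
Qed.

Lemma snoc_assoc (d : list bool) b p : d ++ b :: p = (d ++ [b]) ++ p.
Proof. rewrite <- app_assoc; reflexivity. Qed.

Lemma nodes_shape p T v : In v (lk_nodes p T) ->
  (exists l, v = NLeaf l /\ In l (lk_leaves T)) \/ exists d, v = NLk (d ++ p).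
Proof.
  revert p; induction T; simpl; intros p H.
  - destruct H as [<-|[]]; left; eauto.
  - destruct H as [<-|H]; [right; exists []; auto|].
    apply in_app_or in H as [H|H]; [apply IHT1 in H|apply IHT2 in H];
      (destruct H as [[l [-> Hl]]|[d ->]];
       [left; exists l; split; auto; apply in_or_app; auto
       |right; rewrite snoc_assoc; eexists; reflexivity]).
  - destruct H as [<-|H]; [right; exists []; auto|].
    apply in_app_or in H as [H|H]; [apply IHT1 in H|apply IHT2 in H];
      (destruct H as [[l [-> Hl]]|[d ->]];
       [left; exists l; split; auto; apply in_or_app; auto
       |right; rewrite snoc_assoc; eexists; reflexivity]).
Qed.

Lemma leaf_in_nodes p T l : In l (lk_leaves T) -> In (NLeaf l) (lk_nodes p T).
Proof.
  revert p; induction T; simpl; intros p H.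
  - destruct H as [<-|[]]; auto.
  - right; apply in_app_or in H as [H|H]; apply in_or_app; auto.
  - right; apply in_app_or in H as [H|H]; apply in_or_app; auto.
Qed.

Lemma root_in p T : In (lk_root p T) (lk_nodes p T).
Proof. destruct T; simpl; auto. Qed.

Lemma edges_shape p T c q l : In (c,q,l) (lk_edges p T) ->
  In c (lk_nodes p T) /\ In q (lk_nodes p T) /\ exists d, q = NLk (d ++ p).
Proof.
  revert p; induction T; intros p H; simpl in H. contradiction.
  all: destruct H as [H|[H|H]].
  all: try (inversion H; subst; simpl; split; [right; apply in_or_app; first [left; apply root_in | right; apply root_in] | split; [left; auto|exists []; auto]]).
  all: try (apply in_app_or in H as [H|H]; [apply IHT1 in H|apply IHT2 in H];
    destruct H as [H1 [H2 [d ->]]]; simpl; split; [right; apply in_or_app; auto|split;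
      [right; apply in_or_app; auto| rewrite snoc_assoc; eexists; reflexivity]]).
all: apply in_app_or in H as [H|H]; [apply IHT1 in H|apply IHT2 in H].
all: destruct H as [H1 [H2 [d ->]]]; simpl; split.
all: try (right; apply in_or_app; first [left; assumption | right; assumption]).
all: split; [right; apply in_or_app; first [left; assumption | right; assumption] | rewrite snoc_assoc; eexists; reflexivity].
Qed.

Lemma hpath_ext C p : exists d, hpath C p = d ++ p.
Proof.
  revert p; induction C; simpl; intros p; try (exists []; reflexivity);
  match goal with |- exists d, hpath _ (?b :: p) = _ =>
    destruct (IHC (b::p)) as [d ->]; exists (d ++ [b]); rewrite <- app_assoc; reflexivity end.
Qed.

Lemma hpath_len C p : length p <= length (hpath C p).
Proof. destruct (hpath_ext C p) as [d ->]. rewrite length_app; lia. Qed.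

Definition out (h : list bool) (v : node) := forall d, v <> NLk (d ++ h).

Lemma out_short h q : length q < length h -> out h (NLk q).
Proof. intros Hl d E; inversion E; subst; rewrite length_app in Hl; lia. Qed.

Lemma out_leaf h l : out h (NLeaf l).
Proof. intros d E; discriminate. Qed.

Lemma out_sq h n q : out h (NSq n q).
Proof. intros d E; discriminate. Qed.

Lemma branch_eq (e d : list bool) b b' p : e ++ b :: p = d ++ b' :: p -> b = b'.
Proof.
  intros E. rewrite (snoc_assoc e), (snoc_assoc d) in E.
  apply app_inv_tail in E. apply app_inj_tail in E. tauto.
Qed.

Lemma sub_out p b b' T d0 v : b <> b' -> In v (lk_nodes (b::p) T) -> out (d0 ++ b' :: p) v.
Proof.
  intros Hb H. apply nodes_shape in H as [[l [-> _]]|[e ->]]. apply out_leaf.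
  intros d E. inversion E. rewrite app_assoc in H0. apply branch_eq in H0. auto.
Qed.

Lemma croot_out C p r : croot C p r = r \/ out (hpath C p) (croot C p r).
Proof.
  destruct C; simpl; auto; right; apply out_short;
  match goal with |- _ < length (hpath _ ?q) => pose proof (hpath_len C q) end; simpl in *; lia.
Qed.

Lemma ctx_out C p r :
  (forall c q l, In (c,q,l) (ctx_edges C p r) -> (out (hpath C p) c \/ c = r) /\ out (hpath C p) q) /\
  (forall v, In v (ctx_nodes C p) -> out (hpath C p) v).
Proof.
  revert p; induction C; simpl; intros p.
  - split; intros; contradiction.
  - destruct (IHC (false::p)) as [IE IN].
    destruct (hpath_ext C (false::p)) as [d0 Hd0].
    assert (Ho : out (hpath C (false::p)) (NLk p))
      by (apply out_short; pose proof (hpath_len C (false::p)); simpl in *; lia).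
    assert (Hs : forall v, In v (lk_nodes (true::p) B) -> out (hpath C (false::p)) v)
      by (intros v Hv; rewrite Hd0; eapply sub_out; eauto; discriminate).
    split.
    + intros c q l H. destruct H as [H|[H|H]].
      * inversion H; subst. destruct (croot_out C (false::p) r); auto.
      * inversion H; subst. split; auto. left; apply Hs, root_in.
      * apply in_app_or in H as [H|H]; [eapply IE; eauto|].
        apply edges_shape in H as [H1 [H2 _]]. split; auto.
    + intros v [<-|H]; auto. apply in_app_or in H as [H|H]; auto.
  - destruct (IHC (true::p)) as [IE IN].
    destruct (hpath_ext C (true::p)) as [d0 Hd0].
    assert (Ho : out (hpath C (true::p)) (NLk p))
      by (apply out_short; pose proof (hpath_len C (true::p)); simpl in *; lia).
    assert (Hs : forall v, In v (lk_nodes (false::p) A) -> out (hpath C (true::p)) v)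
      by (intros v Hv; rewrite Hd0; eapply sub_out; eauto; discriminate).
    split.
    + intros c q l H. destruct H as [H|[H|H]].
      * inversion H; subst. split; auto. left; apply Hs, root_in.
      * inversion H; subst. destruct (croot_out C (true::p) r); auto.
      * apply in_app_or in H as [H|H]; [|eapply IE; eauto].
        apply edges_shape in H as [H1 [H2 _]]. split; auto.
    + intros v [<-|H]; auto. apply in_app_or in H as [H|H]; auto.
  - destruct (IHC (false::p)) as [IE IN].
    destruct (hpath_ext C (false::p)) as [d0 Hd0].
    assert (Ho : out (hpath C (false::p)) (NLk p))
      by (apply out_short; pose proof (hpath_len C (false::p)); simpl in *; lia).
    assert (Hs : forall v, In v (lk_nodes (true::p) B) -> out (hpath C (false::p)) v)
      by (intros v Hv; rewrite Hd0; eapply sub_out; eauto; discriminate).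
    split.
    + intros c q l H. destruct H as [H|[H|H]].
      * inversion H; subst. destruct (croot_out C (false::p) r); auto.
      * inversion H; subst. split; auto. left; apply Hs, root_in.
      * apply in_app_or in H as [H|H]; [eapply IE; eauto|].
        apply edges_shape in H as [H1 [H2 _]]. split; auto.
    + intros v [<-|H]; auto. apply in_app_or in H as [H|H]; auto.
  - destruct (IHC (true::p)) as [IE IN].
    destruct (hpath_ext C (true::p)) as [d0 Hd0].
    assert (Ho : out (hpath C (true::p)) (NLk p))
      by (apply out_short; pose proof (hpath_len C (true::p)); simpl in *; lia).
    assert (Hs : forall v, In v (lk_nodes (false::p) A) -> out (hpath C (true::p)) v)
      by (intros v Hv; rewrite Hd0; eapply sub_out; eauto; discriminate).
    split.
    + intros c q l H. destruct H as [H|[H|H]].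
      * inversion H; subst. split; auto. left; apply Hs, root_in.
      * inversion H; subst. destruct (croot_out C (true::p) r); auto.
      * apply in_app_or in H as [H|H]; [|eapply IE; eauto].
        apply edges_shape in H as [H1 [H2 _]]. split; auto.
    + intros v [<-|H]; auto. apply in_app_or in H as [H|H]; auto.
Qed.

Definition strip (h q : list bool) : option (list bool) :=
  if Nat.leb (length h) (length q) then
    if list_eq_dec bool_dec (skipn (length q - length h) q) h
    then Some (firstn (length q - length h) q) else None
  else None.

Lemma strip_app h d : strip h (d ++ h) = Some d.
Proof.
  unfold strip. rewrite length_app.
  replace (length d + length h - length h) with (length d) by lia.
  destruct (Nat.leb_spec (length h) (length d + length h)); [|lia].
  rewrite skipn_app, firstn_app, Nat.sub_diag, skipn_all, firstn_all. simpl.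
  destruct (list_eq_dec bool_dec h h) as [_|n]; [|congruence]. rewrite app_nil_r; auto.
Qed.

Lemma strip_some h q d : strip h q = Some d -> q = d ++ h.
Proof.
  unfold strip. destruct (Nat.leb _ _); [|discriminate].
  destruct (list_eq_dec _ _ _) as [E|]; [|discriminate]. intros H; inversion H; subst.
  rewrite <- E at 2. symmetry; apply firstn_skipn.
Qed.

Definition phi (sg : list bool -> list bool) (h : list bool) (v : node) : node :=
  match v with
  | NLk q => match strip h q with Some d => NLk (rev (sg (rev d)) ++ h) | None => NLk q end
  | _ => v
  end.

Lemma phi_out sg h v : out h v -> phi sg h v = v.
Proof.
  destruct v; simpl; auto. intros O. destruct (strip h p) eqn:E; auto.
  apply strip_some in E; subst. exfalso; eapply O; eauto.
Qed.

Lemma phi_ext sg h d : phi sg h (NLk (d ++ h)) = NLk (rev (sg (rev d)) ++ h).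
Proof. simpl. rewrite strip_app; auto. Qed.

Lemma phi_inv sg tg h v : (forall g, tg (sg g) = g) -> phi tg h (phi sg h v) = v.
Proof.
  intros Hi. destruct v; simpl; auto. destruct (strip h p) eqn:E.
  - apply strip_some in E; subst. simpl. rewrite strip_app, rev_involutive, Hi, rev_involutive; auto.
  - simpl. rewrite E; auto.
Qed.

Definition renN (f : node -> node) (e : ledge) : ledge := let '(c,q,l) := e in (f c, f q, l).

Lemma reloc f T : forall p p', (forall l, f (NLeaf l) = NLeaf l) ->
  (forall d, f (NLk (d ++ p)) = NLk (d ++ p')) ->
  lk_edges p' T = map (renN f) (lk_edges p T) /\ lk_nodes p' T = map f (lk_nodes p T) /\
  lk_root p' T = f (lk_root p T).
Proof.
  induction T as [l|A IHA B IHB|A IHA B IHB]; intros p p' Hl Hd.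
  - simpl. rewrite Hl; auto.
  - assert (H0 : f (NLk p) = NLk p') by apply (Hd []).
    destruct (IHA (false::p) (false::p') Hl) as [EA [NA RA]].
    { intros d; rewrite (snoc_assoc d false p), (snoc_assoc d false p'); apply Hd. }
    destruct (IHB (true::p) (true::p') Hl) as [EB [NB RB]].
    { intros d; rewrite (snoc_assoc d true p), (snoc_assoc d true p'); apply Hd. }
    simpl. rewrite EA, EB, NA, NB, RA, RB, H0, !map_app. auto.
  - assert (H0 : f (NLk p) = NLk p') by apply (Hd []).
    destruct (IHA (false::p) (false::p') Hl) as [EA [NA RA]].
    { intros d; rewrite (snoc_assoc d false p), (snoc_assoc d false p'); apply Hd. }
    destruct (IHB (true::p) (true::p') Hl) as [EB [NB RB]].
    { intros d; rewrite (snoc_assoc d true p), (snoc_assoc d true p'); apply Hd. }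
    simpl. rewrite EA, EB, NA, NB, RA, RB, H0, !map_app. auto.
Qed.

Lemma phi_reloc sg h e e' : (forall g, sg (rev e ++ g) = rev e' ++ g) ->
  forall d, phi sg h (NLk (d ++ (e ++ h))) = NLk (d ++ (e' ++ h)).
Proof.
  intros H d. rewrite app_assoc, phi_ext, rev_app_distr, H, rev_app_distr, !rev_involutive, app_assoc; auto.
Qed.

Definition notlk (v : node) : Prop := match v with NLk _ => False | _ => True end.

Lemma fm_shape n p A c q l : In (c,q,l) (fm_edges n p A) -> notlk c /\ notlk q.
Proof.
  revert p; induction A; simpl; intros p H; [contradiction| |];
  (destruct H as [H|[H|H]];
   [inversion H; subst; destruct A1; simpl; auto
   |inversion H; subst; destruct A2; simpl; auto
   |apply in_app_or in H as [H|H]; eauto]).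
Qed.

Lemma fm_nshape n p A v : In v (fm_nodes n p A) -> notlk v.
Proof.
  revert p; induction A; simpl; intros p H.
  - destruct H as [<-|[]]; simpl; auto.
  - destruct H as [<-|H]; simpl; auto. apply in_app_or in H as [H|H]; eauto.
  - destruct H as [<-|H]; simpl; auto. apply in_app_or in H as [H|H]; eauto.
Qed.

Lemma seq_shape G : forall n c q l, In (c,q,l) (seq_edges n G) -> notlk c /\ notlk q.
Proof.
  induction G as [|it G IH]; simpl; intros n c q l H; [contradiction|].
  apply in_app_or in H as [H|H]; eauto.
  destruct it; simpl in H; [eapply fm_shape; eauto|].
  destruct H as [H|[H|H]];
   [inversion H; subst; destruct A; simpl; auto
   |inversion H; subst; destruct B; simpl; auto
   |apply in_app_or in H as [H|H]; eapply fm_shape; eauto].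
Qed.

Lemma seq_nshape G : forall n v, In v (seq_nodes n G) -> notlk v.
Proof.
  induction G as [|it G IH]; simpl; intros n v H; [contradiction|].
  apply in_app_or in H as [H|H]; eauto.
  destruct it; simpl in H; [eapply fm_nshape; eauto|].
  destruct H as [<-|H]; simpl; auto. apply in_app_or in H as [H|H]; eapply fm_nshape; eauto.
Qed.

Lemma out_notlk h v : notlk v -> out h v.
Proof. destruct v; simpl; intros H; try contradiction; intros d E; discriminate. Qed.

Lemma pg_edges_frame C G X : isLeafb X = false ->
  Permutation (pg_edges (plug C X) G)
   ((ctx_edges C [] (NLk (hpath C [])) ++ seq_edges 0 G) ++ lk_edges (hpath C []) X).
Proof.
  intros HX. unfold pg_edges. rewrite edges_plug.
  replace (lk_root (hpath C []) X) with (NLk (hpath C [])) by (destruct X; simpl in *; congruence).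
  rewrite <- !app_assoc. apply Permutation_app_head, Permutation_app_comm.
Qed.

Lemma pg_nodes_frame C G X :
  Permutation (pg_nodes (plug C X) G)
   ((ctx_nodes C [] ++ seq_nodes 0 G) ++ lk_nodes (hpath C []) X).
Proof.
  unfold pg_nodes. rewrite nodes_plug.
  rewrite <- !app_assoc. apply Permutation_app_head, Permutation_app_comm.
Qed.

Lemma frameK C G c q l : In (c,q,l) (ctx_edges C [] (NLk (hpath C [])) ++ seq_edges 0 G) ->
  (out (hpath C []) c \/ c = NLk (hpath C [])) /\ out (hpath C []) q.
Proof.
  intros H. apply in_app_or in H as [H|H].
  - destruct (ctx_out C [] (NLk (hpath C []))) as [H1 _]. eauto.
  - apply seq_shape in H as [H1 H2]. split; [left|]; apply out_notlk; auto.
Qed.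

Lemma frameN C G v : In v (ctx_nodes C [] ++ seq_nodes 0 G) -> out (hpath C []) v.
Proof.
  intros H. apply in_app_or in H as [H|H].
  - destruct (ctx_out C [] (NLk (hpath C []))) as [_ H1]. eauto.
  - apply out_notlk; eapply seq_nshape; eauto.
Qed.

Lemma phi_root sg h : sg [] = [] -> phi sg h (NLk h) = NLk h.
Proof. intros H. change (NLk h) with (NLk ([] ++ h)) at 1. rewrite phi_ext; simpl; rewrite H; reflexivity. Qed.

Lemma out_neq h q : out h q -> q <> NLk h.
Proof. intros O E. apply (O []). auto. Qed.

Lemma ren_K sg h fl K : sg [] = [] -> (forall q, out h q -> fl q = false) ->
  (forall c q l, In (c,q,l) K -> (out h c \/ c = NLk h) /\ out h q) ->
  map (renE (phi sg h) fl) K = K.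
Proof.
  intros Hs Hf HK. induction K as [|[[c q] l] K IH]; simpl; auto.
  destruct (HK c q l) as [[Hc|Hc] Hq]; simpl; auto.
  - rewrite Hf, phi_out, phi_out, IH; auto. intros; eapply HK; simpl; eauto.
  - subst. rewrite Hf, phi_root, phi_out, IH; auto. intros; eapply HK; simpl; eauto.
Qed.

Lemma map_phi_K sg h V : (forall v, In v V -> out h v) -> map (phi sg h) V = V.
Proof.
  intros H. induction V; simpl; auto. rewrite phi_out, IHV; auto. intros; apply H; simpl; auto.
  apply H; simpl; auto.
Qed.

Definition flh (h : list bool) (v : node) : bool := if node_eq_dec v (NLk h) then true else false.

Lemma flh_out h q : out h q -> flh h q = false.
Proof. intros O. unfold flh. destruct node_eq_dec; auto. exfalso; eapply out_neq; eauto. Qed.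

Lemma ren_sub sg h fl T e e' :
  (forall q, q <> NLk h -> fl q = false) ->
  (forall g, sg (rev e ++ g) = rev e' ++ g) ->
  e <> [] ->
  map (renE (phi sg h) fl) (lk_edges (e ++ h) T) = lk_edges (e' ++ h) T /\
  map (phi sg h) (lk_nodes (e ++ h) T) = lk_nodes (e' ++ h) T /\
  phi sg h (lk_root (e ++ h) T) = lk_root (e' ++ h) T.
Proof.
  intros Hf Hsg He.
  destruct (reloc (phi sg h) T (e ++ h) (e' ++ h)) as [R1 [R2 R3]]; auto.
  { intros d. apply phi_reloc; auto. }
  rewrite R1, R2, R3. split; auto.
  apply map_ext_in. intros [[c q] l] Hin. apply edges_shape in Hin as [_ [_ [d ->]]].
  simpl. rewrite Hf; auto. intros E. inversion E.
  apply (f_equal (@length bool)) in H0. rewrite !length_app in H0.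
  destruct e; [congruence|]. simpl in H0. lia.
Qed.

Definition sgswap (g : list bool) : list bool :=
  match g with [] => [] | b :: g' => negb b :: g' end.

Lemma sgswap_inv g : sgswap (sgswap g) = g.
Proof. destruct g; simpl; auto. rewrite negb_involutive; auto. Qed.

Definition mk (par : bool) (A B : lk) : lk := if par then LPar A B else LTens A B.

Lemma tree_swap C G A B par :
  TreeProp (pg_nodes (plug C (mk par A B)) G) (pg_edges (plug C (mk par A B)) G) ->
  TreeProp (pg_nodes (plug C (mk par B A)) G) (pg_edges (plug C (mk par B A)) G).
Proof.
  set (h := hpath C []).
  assert (HnlX : forall A B, isLeafb (mk par A B) = false) by (destruct par; reflexivity).
  apply tree_iso with (phi := phi sgswap h) (psi := phi sgswap h) (fl := flh h).
  - intros; apply phi_inv, sgswap_inv.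
  - rewrite pg_edges_frame by apply HnlX.
    eapply Permutation_trans; [|apply Permutation_map, Permutation_sym, pg_edges_frame; apply HnlX].
    rewrite map_app. fold h. rewrite ren_K; auto; [|intros; apply flh_out; auto|apply frameK].
    apply Permutation_app_head.
    assert (Hf : forall q, q <> NLk h -> flh h q = false)
      by (intros q Hq; unfold flh; destruct node_eq_dec; congruence).
    destruct (ren_sub sgswap h (flh h) A [false] [true] Hf) as [EA [_ RA]]; auto; try discriminate.
    destruct (ren_sub sgswap h (flh h) B [true] [false] Hf) as [EB [_ RB]]; auto; try discriminate.
    simpl in EA, RA, EB, RB.
    assert (Hh : flh h (NLk h) = true) by (unfold flh; destruct node_eq_dec; congruence).
    destruct par; cbn -[phi flh]; rewrite Hh, phi_root, RA, RB, map_app, EA, EB by reflexivity; simpl;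
      (eapply perm_trans; [apply perm_swap|]); do 2 constructor; apply Permutation_app_comm.
  - intros v Hv. eapply Permutation_in in Hv; [|apply pg_nodes_frame].
    eapply Permutation_in; [apply Permutation_map, Permutation_sym, pg_nodes_frame|].
    rewrite map_app. fold h. rewrite map_phi_K; [|apply frameN].
    destruct (ren_sub sgswap h (flh h) A [false] [true]) as [_ [NA _]]; auto; try discriminate.
    { intros q Hq; unfold flh; destruct node_eq_dec; congruence. }
    destruct (ren_sub sgswap h (flh h) B [true] [false]) as [_ [NB _]]; auto; try discriminate.
    { intros q Hq; unfold flh; destruct node_eq_dec; congruence. }
    simpl in NA, NB.
    apply in_app_or in Hv as [Hv|Hv]; apply in_or_app; [left; auto|right].
    destruct par; cbn -[phi] in *; rewrite phi_root by reflexivity; rewrite map_app, NA, NB;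
      destruct Hv as [Hv|Hv]; auto; right; apply in_app_or in Hv; apply in_or_app; tauto.
Qed.

Lemma pg_swap C G A B par : proof_graph (plug C (mk par A B)) G -> proof_graph (plug C (mk par B A)) G.
Proof.
  intros [L [W [N [P T]]]].
  assert (PL : Permutation (lk_leaves (plug C (mk par A B))) (lk_leaves (plug C (mk par B A)))).
  { apply leaves_plug. destruct par; apply Permutation_app_comm. }
  split; [|split; [auto|split; [|split]]].
  - apply (linking_plug C (mk par A B) (mk par B A)); [destruct par; reflexivity| |exact L].
    destruct par; simpl; intros H.
    + apply par_inv in H as [H1 H2]; constructor; auto.
    + inversion H; subst; constructor; auto.
  - eapply Permutation_NoDup; eauto.
  - eapply Permutation_trans; [apply Permutation_sym|]; eauto.
  - apply tree_swap. exact T.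
Qed.

Lemma sw_incl s E E' : incl E E' -> incl (sw_edges s E) (sw_edges s E').
Proof. intros I [u v] H. apply sw_in in H as [l [H1 H2]]. apply sw_in. eauto. Qed.

Lemma kept_agree s s' c q l : s' q = s q -> kept s' (c,q,l) = kept s (c,q,l).
Proof. intros Hq; destruct l; simpl; auto; rewrite Hq; auto. Qed.

Lemma sw_none s E c q : In (c,q,None) E -> In (c,q) (sw_edges s E).
Proof. intros H; apply sw_in; exists None; auto. Qed.

Lemma climb p T : forall s w, In w (lk_nodes p T) -> exists s',
  (forall v, ~ In v (lk_nodes p T) -> s' v = s v) /\
  walk (sw_edges s' (lk_edges p T)) w (lk_root p T).
Proof.
  revert p; induction T as [l|A IHA B IHB|A IHA B IHB]; intros p s w H.
  - simpl in H. destruct H as [<-|[]]. exists s; split; auto. constructor.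
  - simpl in H. destruct H as [<-|H]. exists s; split; auto; constructor.
    apply in_app_or in H as [H|H].
    + destruct (IHA (false::p) s w H) as [s' [Ag W]]. exists s'. split.
      * intros v Hv; apply Ag; intro; apply Hv; simpl; right; apply in_or_app; auto.
      * apply walk_trans with (lk_root (false::p) A).
        -- eapply walk_incl; [|exact W]. apply sw_incl. intros e He; simpl; right; right; apply in_or_app; auto.
        -- apply walk_edge, sw_none. simpl; auto.
    + destruct (IHB (true::p) s w H) as [s' [Ag W]]. exists s'. split.
      * intros v Hv; apply Ag; intro; apply Hv; simpl; right; apply in_or_app; auto.
      * apply walk_trans with (lk_root (true::p) B).
        -- eapply walk_incl; [|exact W]. apply sw_incl. intros e He; simpl; right; right; apply in_or_app; auto.
        -- apply walk_edge, sw_none. simpl; auto.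
  - simpl in H. destruct H as [<-|H]. exists s; split; auto; constructor.
    apply in_app_or in H as [H|H].
    + destruct (IHA (false::p) s w H) as [s' [Ag W]].
      exists (fun v => if node_eq_dec v (NLk p) then false else s' v). split.
      * intros v Hv. destruct node_eq_dec. subst; exfalso; apply Hv; simpl; auto.
        apply Ag; intro; apply Hv; simpl; right; apply in_or_app; auto.
      * apply walk_trans with (lk_root (false::p) A).
        -- rewrite (sw_agree s' (fun v => if node_eq_dec v (NLk p) then false else s' v)) in W.
           ++ eapply walk_incl; [|exact W].
              apply sw_incl. intros e He; simpl; right; right; apply in_or_app; auto.
           ++ intros [[c q] l] He. apply edges_shape in He as [_ [_ [d ->]]]. cbn [fst snd].
              destruct (node_eq_dec (NLk (d ++ false :: p)) (NLk p)) as [E|]; auto. inversion E.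
              apply (f_equal (@length bool)) in H1. rewrite length_app in H1; simpl in H1; lia.
        -- apply walk_edge, sw_in. exists (Some false). split; [simpl; auto|].
           cbn -[node_eq_dec]. destruct (node_eq_dec (NLk p) (NLk p)); [auto|congruence].
    + destruct (IHB (true::p) s w H) as [s' [Ag W]].
      exists (fun v => if node_eq_dec v (NLk p) then true else s' v). split.
      * intros v Hv. destruct node_eq_dec. subst; exfalso; apply Hv; simpl; auto.
        apply Ag; intro; apply Hv; simpl; right; apply in_or_app; auto.
      * apply walk_trans with (lk_root (true::p) B).
        -- rewrite (sw_agree s' (fun v => if node_eq_dec v (NLk p) then true else s' v)) in W.
           ++ eapply walk_incl; [|exact W].
              apply sw_incl. intros e He; simpl; right; right; apply in_or_app; auto.
           ++ intros [[c q] l] He. apply edges_shape in He as [_ [_ [d ->]]]. cbn [fst snd].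
              destruct (node_eq_dec (NLk (d ++ true :: p)) (NLk p)) as [E|]; auto. inversion E.
              apply (f_equal (@length bool)) in H1. rewrite length_app in H1; simpl in H1; lia.
        -- apply walk_edge, sw_in. exists (Some true). split; [simpl; auto|].
           cbn -[node_eq_dec]. destruct (node_eq_dec (NLk p) (NLk p)); [auto|congruence].
Qed.

Lemma enter E (S : node -> Prop) s x y :
  (forall c q l, In (c,q,l) E -> S q -> S c) ->
  walk (sw_edges s E) x y -> ~ S x -> S y ->
  exists w, S w /\ forall s', (forall v, ~ S v -> s' v = s v) -> walk (sw_edges s' E) x w.
Proof.
  intros H2 W. induction W as [u|u v w0 Huv W IH]; intros Hx Hy; [contradiction|].
  assert (Ed : forall s', (forall v, ~ S v -> s' v = s v) -> In (u,v) (sw_edges s' E) \/ In (v,u) (sw_edges s' E)).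
  { intros s' Ag. destruct Huv as [Hi|Hi]; apply sw_in in Hi as [l [Hi Hk]]; [left|right]; apply sw_in; exists l;
    split; auto; rewrite (kept_agree s s'); auto; apply Ag; auto; intro Sv; apply Hx; eapply H2; eauto. }
  destruct (classic (S v)) as [Sv|Sv].
  - exists v; split; auto. intros s' Ag. apply walk_step with v; [apply Ed; auto|constructor].
  - destruct (IH Sv Hy) as [w [Sw Hw]]. exists w; split; auto.
    intros s' Ag. apply walk_step with v; auto.
Qed.

Lemma reach_root E p T s x y :
  (forall c q l, In (c,q,l) E -> In q (lk_nodes p T) -> In c (lk_nodes p T)) ->
  incl (lk_edges p T) E ->
  walk (sw_edges s E) x y -> ~ In x (lk_nodes p T) -> In y (lk_nodes p T) ->
  exists s', walk (sw_edges s' E) x (lk_root p T).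
Proof.
  intros H2 I W Hx Hy.
  destruct (enter E (fun v => In v (lk_nodes p T)) s x y H2 W Hx Hy) as [w [Sw Hw]].
  destruct (climb p T s w Sw) as [s' [Ag Wc]].
  exists s'. apply walk_trans with w; auto.
  eapply walk_incl; [apply sw_incl; exact I|exact Wc].
Qed.

Lemma perm3a {T} (a b c : T) l : Permutation (a::b::c::l) (c::a::b::l).
Proof. eapply perm_trans; [apply perm_skip, perm_swap|apply perm_swap]. Qed.
Lemma perm3b {T} (a b c : T) l : Permutation (a::b::c::l) (b::c::a::l).
Proof. eapply perm_trans; [apply perm_swap|apply perm_skip, perm_swap]. Qed.

Definition upd (s : switching) (a : node) (c : bool) : switching :=
  fun v => if node_eq_dec v a then c else s v.

Lemma surgery (V1 V2 : list node) (M : list ledge) (a b q r bot : node) (QN : list node) :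
  (forall s, connected V1 (sw_edges s ([(q,a,Some false);(b,a,Some true);(r,b,None);(bot,b,None)] ++ M)) /\
             acyclic (sw_edges s ([(q,a,Some false);(b,a,Some true);(r,b,None);(bot,b,None)] ++ M))) ->
  (forall c p l, In (c,p,l) M -> c <> b /\ p <> b /\ p <> a) ->
  a <> b -> q <> b -> bot <> b -> r <> b ->
  In q QN ->
  (forall s u, In u QN -> walk (sw_edges s M) bot u -> exists s', walk (sw_edges s' M) bot r) ->
  incl V2 V1 -> In r V1 -> In a V1 ->
  (forall s, connected V2 (sw_edges s ([(b,a,None);(bot,a,None);(q,b,Some false);(r,b,Some true)] ++ M)) /\
             acyclic (sw_edges s ([(b,a,None);(bot,a,None);(q,b,Some false);(r,b,Some true)] ++ M))) /\
  (forall s u, In u QN -> ~ walk (sw_edges s ([(q,a,Some false);(b,a,Some true);(r,b,None)] ++ M)) u bot).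
Proof.
  intros F Iso Hab Hqb Hbb Hrb HqQ REACH I2 HrV HaV.
  set (W := fun s x y => walk (sw_edges s M) x y).
  assert (Hind : forall s c, sw_edges (upd s a c) M = sw_edges s M).
  { intros s c. apply sw_agree. intros [[c0 p] l] He. apply Iso in He as [_ [_ Hp]].
    unfold upd; simpl. destruct node_eq_dec; congruence. }
  assert (Hsp1 : forall s, sw_edges s [(q,a,Some false);(b,a,Some true);(r,b,None);(bot,b,None)] =
            if s a then [(b,a);(r,b);(bot,b)] else [(q,a);(r,b);(bot,b)]).
  { intros s; unfold sw_edges; simpl; destruct (s a); reflexivity. }
  assert (Hua : forall s c, upd s a c a = c).
  { intros; unfold upd; destruct node_eq_dec; congruence. }
  assert (FL : forall s, connected V1 ((q,a)::(r,b)::(bot,b)::sw_edges s M) /\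
                         acyclic ((q,a)::(r,b)::(bot,b)::sw_edges s M)).
  { intros s. destruct (F (upd s a false)) as [F1 F2].
    rewrite sw_app, Hsp1, Hua, Hind in F1, F2. auto. }
  assert (FR : forall s, acyclic ((b,a)::(r,b)::(bot,b)::sw_edges s M)).
  { intros s. destruct (F (upd s a true)) as [F1 F2].
    rewrite sw_app, Hsp1, Hua, Hind in F2. auto. }
  assert (IsoE : forall s u v, In (u,v) (sw_edges s M) -> u <> b /\ v <> b).
  { intros s u v H. apply sw_in in H as [l [H _]]. apply Iso in H; tauto. }
  assert (IsoW : forall s x, W s b x -> x = b).
  { intros s x Hw. apply (walk_closed _ (fun y => y = b)) in Hw; auto.
    intros u v H. apply IsoE in H. split; intros; subst; tauto. }
  assert (IsoW' : forall s x, W s x b -> x = b).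
  { intros s x Hw. apply IsoW with s. apply walk_sym; auto. }
  assert (Wedge : forall s u v, In (u,v) (sw_edges s M) -> W s u v /\ W s v u).
  { intros; split; [apply walk_edge|apply walk_sym, walk_edge]; auto. }
  assert (Wcl : forall s z u v, In (u,v) (sw_edges s M) -> (W s u z <-> W s v z)).
  { intros s z u v H. apply Wedge in H as [H1 H2]. split; intros; eapply walk_trans; eauto. }
  assert (D1 : forall s, ~ W s r bot).
  { intros s Hw. destruct (FL s) as [_ A].
    apply acyclic_tail in A. apply (acyclic_perm _ _ (perm_swap _ _ _)) in A.
    apply cyc1 in A. apply A. apply walk_trans with r.
    - apply walk_sym. eapply walk_incl; [|exact Hw]. intros e He; simpl; auto.
    - apply walk_edge; simpl; auto. }
  assert (D2a : forall s, ~ W s a bot).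
  { intros s Hw. pose proof (FR s) as A.
    apply (acyclic_perm _ _ (perm_swap _ _ _)) in A. apply acyclic_tail in A.
    apply cyc1 in A. apply A. apply walk_trans with bot.
    - apply walk_sym, walk_edge; simpl; auto.
    - apply walk_sym. eapply walk_incl; [|exact Hw]. intros e He; simpl; auto. }
  assert (D2b : forall s, ~ W s a r).
  { intros s Hw. pose proof (FR s) as A.
    apply (acyclic_perm _ _ (perm3a _ _ _ _)) in A. apply acyclic_tail in A.
    apply cyc1 in A. apply A. apply walk_trans with r.
    - apply walk_sym, walk_edge; simpl; auto.
    - apply walk_sym. eapply walk_incl; [|exact Hw]. intros e He; simpl; auto. }
  assert (D3 : forall s, ~ W s q a).
  { intros s Hw. destruct (FL s) as [_ A].
    apply (acyclic_perm _ _ (perm3b _ _ _ _)) in A. do 2 apply acyclic_tail in A.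
    apply cyc1 in A. auto. }
  assert (AH : forall s, acyclic (sw_edges s M)).
  { intros s. destruct (FL s) as [_ A]. do 3 apply acyclic_tail in A. auto. }
  assert (KEY : forall s u, In u QN -> ~ W s u bot).
  { intros s u Hu Hw. destruct (REACH s u Hu (walk_sym _ _ _ Hw)) as [s' Hs'].
    apply (D1 s'). apply walk_sym; auto. }
  assert (Wrq : forall s, W s r q).
  { intros s. apply NNPP; intros NW.
    destruct (FL s) as [C _].
    assert (Wra := C r a HrV HaV).
    apply (walk_closed _ (fun x => W s x r \/ x = b \/ W s x bot)) in Wra.
    - destruct Wra as [H|[H|H]]; [eapply D2b| |eapply D2a]; eauto.
    - intros u v H. simpl in H. destruct H as [H|[H|[H|H]]].
      + inversion H; subst. split; intros [H'|[H'|H']].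
        * exfalso; apply NW, walk_sym; auto.
        * congruence.
        * exfalso; eapply KEY; eauto.
        * exfalso; eapply D2b; eauto.
        * congruence.
        * exfalso; eapply D2a; eauto.
      + inversion H; subst. split; intros; [right; left|left]; auto. constructor.
      + inversion H; subst. split; intros; [right; left|right; right]; auto. constructor.
      + pose proof (IsoE _ _ _ H) as [Hu Hv].
        pose proof (Wcl s r u v H). pose proof (Wcl s bot u v H). intuition.
    - left; constructor. }
  split.
  - intros s.
    rewrite sw_app.
    assert (Hsp2 : sw_edges s [(b,a,None);(bot,a,None);(q,b,Some false);(r,b,Some true)] =
              (b,a)::(bot,a)::(if s b then [(r,b)] else [(q,b)])).
    { unfold sw_edges; simpl; destruct (s b); reflexivity. }
    rewrite Hsp2.
    split.
    + intros u v Hu Hv. destruct (FL s) as [C _].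
      specialize (C u v (I2 _ Hu) (I2 _ Hv)).
      eapply walk_sub; [|exact C].
      assert (Eba : walk ((b,a)::(bot,a)::(if s b then [(r,b)] else [(q,b)]) ++ sw_edges s M) b a)
        by (apply walk_edge; simpl; auto).
      assert (Ebota : walk ((b,a)::(bot,a)::(if s b then [(r,b)] else [(q,b)]) ++ sw_edges s M) bot a)
        by (apply walk_edge; simpl; auto).
      assert (Ewq : forall x y, W s x y -> walk ((b,a)::(bot,a)::(if s b then [(r,b)] else [(q,b)]) ++ sw_edges s M) x y).
      { intros x y; apply walk_incl. intros e He; simpl; right; right; apply in_or_app; auto. }
      assert (Eqb : walk ((b,a)::(bot,a)::(if s b then [(r,b)] else [(q,b)]) ++ sw_edges s M) q b).
      { destruct (s b) eqn:Sb.
        - apply walk_trans with r. apply Ewq, walk_sym, Wrq. apply walk_edge; simpl; auto.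
        - apply walk_edge; simpl; auto. }
      assert (Erb : walk ((b,a)::(bot,a)::(if s b then [(r,b)] else [(q,b)]) ++ sw_edges s M) r b).
      { destruct (s b) eqn:Sb.
        - apply walk_edge; simpl; auto.
        - apply walk_trans with q. apply Ewq, Wrq. auto. }
      intros x y H. simpl in H. destruct H as [H|[H|[H|H]]]; try (inversion H; subst).
      * eapply walk_trans; eauto.
      * auto.
      * eapply walk_trans; [exact Ebota|apply walk_sym; auto].
      * apply Ewq, walk_edge; auto.
    + destruct (s b) eqn:Sb; simpl.
      * apply acyclic_add; [apply acyclic_add; [apply acyclic_add; auto|]|].
        -- intros Hw. apply walk_sym, IsoW in Hw. congruence.
        -- intros Hw. apply (walk_closed _ (fun x => W s x bot)) in Hw; [eapply D2a; eauto| |constructor].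
           intros u v H. destruct H as [H|H]; [inversion H; subst|].
           ++ split; intros H'; exfalso; [eapply D1; eauto|apply IsoW in H'; auto].
           ++ apply Wcl; auto.
        -- intros Hw. apply (walk_closed _ (fun x => x = b \/ W s x r)) in Hw; [|  |left; auto].
           ++ destruct Hw as [Hw|Hw]; [congruence|eapply D2b; eauto].
           ++ intros u v H. destruct H as [H|[H|H]]; [inversion H; subst|inversion H; subst|].
              ** split; intros [H'|H']; try congruence; exfalso.
                 --- eapply D1; apply walk_sym; eauto.
                 --- eapply D2b; eauto.
              ** split; intros; [left; reflexivity|right; apply walk_refl].
              ** pose proof (IsoE _ _ _ H) as [Hu Hv]. pose proof (Wcl s r u v H). intuition.
      * apply acyclic_add; [apply acyclic_add; [apply acyclic_add; auto|]|].
        -- intros Hw. apply walk_sym, IsoW in Hw. congruence.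
        -- intros Hw. apply (walk_closed _ (fun x => W s x bot)) in Hw; [eapply D2a; eauto| |constructor].
           intros u v H. destruct H as [H|H]; [inversion H; subst|].
           ++ split; intros H'; exfalso; [eapply KEY; eauto|apply IsoW in H'; auto].
           ++ apply Wcl; auto.
        -- intros Hw. apply (walk_closed _ (fun x => x = b \/ W s x q)) in Hw; [|  |left; auto].
           ++ destruct Hw as [Hw|Hw]; [congruence|eapply D3; apply walk_sym; eauto].
           ++ intros u v H. destruct H as [H|[H|H]]; [inversion H; subst|inversion H; subst|].
              ** split; intros [H'|H']; try congruence; exfalso.
                 --- eapply KEY; eauto; apply walk_sym; eauto.
                 --- eapply D3; apply walk_sym; eauto.
              ** split; intros; [left; reflexivity|right; apply walk_refl].
              ** pose proof (IsoE _ _ _ H) as [Hu Hv]. pose proof (Wcl s q u v H). intuition.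
  - intros s u Hu Hw. rewrite sw_app in Hw.
    assert (Hsp : sw_edges s [(q,a,Some false);(b,a,Some true);(r,b,None)] =
              if s a then [(b,a);(r,b)] else [(q,a);(r,b)]).
    { unfold sw_edges; simpl; destruct (s a); reflexivity. }
    rewrite Hsp in Hw. apply walk_sym in Hw.
    apply (walk_closed _ (fun x => W s x bot)) in Hw; [eapply KEY; eauto| |constructor].
    intros x y H. apply in_app_or in H as [H|H]; [|apply Wcl; auto].
    assert (NB : ~ W s b bot) by (intros H'; apply IsoW in H'; auto).
    destruct (s a); simpl in H; destruct H as [H|[H|[]]]; inversion H; subst;
      split; intros H'; exfalso; first [solve [eapply D2a; eauto] | solve [eapply KEY; [|exact H']; assumption] | solve [eapply D1; eauto] | solve [apply NB; auto]].
Qed.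

Lemma ctx_par C : forall p r c q l, In (c,q,l) (ctx_edges C p r) -> exists z, q = NLk z.
Proof.
  induction C; simpl; intros p r c q l H; try contradiction;
  (destruct H as [H|[H|H]]; [inversion H; eauto|inversion H; eauto|]);
  apply in_app_or in H as [H|H]; eauto;
  apply edges_shape in H as [_ [_ [d ->]]]; eauto.
Qed.

Lemma fm_par n p A c q l : In (c,q,l) (fm_edges n p A) -> exists n' z, q = NSq n' z.
Proof.
  revert p; induction A; simpl; intros p H; [contradiction| |];
  (destruct H as [H|[H|H]]; [inversion H; eauto|inversion H; eauto|]);
  apply in_app_or in H as [H|H]; eauto.
Qed.

Lemma seq_par G : forall n c q l, In (c,q,l) (seq_edges n G) -> exists n' z, q = NSq n' z.
Proof.
  induction G as [|it G IH]; simpl; intros n c q l H; [contradiction|].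
  apply in_app_or in H as [H|H]; eauto.
  destruct it; simpl in H; [eapply fm_par; eauto|].
  destruct H as [H|[H|H]]; [inversion H; eauto|inversion H; eauto|].
  apply in_app_or in H as [H|H]; eapply fm_par; eauto.
Qed.

Lemma sub_neq p T v h0 : In v (lk_nodes p T) -> length h0 < length p -> v <> NLk h0.
Proof.
  intros H Hl E. subst. apply nodes_shape in H as [[l [E _]]|[d E]]; [discriminate|].
  inversion E; subst. rewrite length_app in Hl; lia.
Qed.

Lemma sub_disj p T T' z : In (NLk z) (lk_nodes (true::p) T) -> In (NLk z) (lk_nodes (false::p) T') -> False.
Proof.
  intros H1 H2. apply nodes_shape in H1 as [[l [E _]]|[d1 E1]]; [discriminate|].
  apply nodes_shape in H2 as [[l [E _]]|[d2 E2]]; [discriminate|].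
  rewrite E1 in E2. inversion E2. apply branch_eq in H0. discriminate.
Qed.

Lemma nodup_disj {T} (l1 l2 : list T) x : NoDup (l1 ++ l2) -> In x l1 -> In x l2 -> False.
Proof.
  induction l1 as [|a l1 IH]; simpl; intros ND H1 H2; [contradiction|].
  inversion ND; subst. destruct H1 as [->|H1]; eauto.
  apply H3; apply in_or_app; auto.
Qed.

Definition sgR (g : list bool) : list bool :=
  match g with
  | [] => []
  | false :: g' => false :: false :: g'
  | true :: false :: g' => false :: true :: g'
  | [true] => [false]
  | true :: true :: g' => true :: g'
  end.

Definition sgRi (g : list bool) : list bool :=
  match g with
  | [] => []
  | false :: false :: g' => false :: g'
  | false :: true :: g' => true :: false :: g'
  | [false] => [true]
  | true :: g' => true :: true :: g'
  end.

Lemma sgR_inv g : sgRi (sgR g) = g.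
Proof. destruct g as [|[|] [|[|] g]]; reflexivity. Qed.

Lemma perm_h1 {T} (K EQ ER : list T) x1 x2 x3 x4 :
  Permutation (K ++ x1::x2::EQ ++ x3::x4::ER) ([x1;x2;x3;x4] ++ K ++ EQ ++ ER).
Proof.
  apply Permutation_sym. simpl.
  apply Permutation_cons_app. apply Permutation_cons_app.
  rewrite !app_assoc. apply Permutation_cons_app. apply Permutation_cons_app. reflexivity.
Qed.

Lemma perm_h2 {T} (K EQ ER : list T) x1 x2 x3 x4 :
  Permutation (K ++ x1::x2::(x3::x4::EQ ++ ER) ++ []) ([x1;x2;x3;x4] ++ K ++ EQ ++ ER).
Proof.
  rewrite app_nil_r. apply Permutation_sym. simpl.
  do 4 apply Permutation_cons_app. reflexivity.
Qed.

Lemma rewire_ok P R Q x i j k Gm :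
  proof_graph (plug P (LPar (LTens (LLeaf (dual_lit x, j)) Q) (LTens (plug R (LLeaf (x,i))) (LLeaf (Bot,k)))))
              (ICut (FLit (x, i)) (FLit (dual_lit x, j)) :: Gm) ->
  proof_graph (plug P (LTens (LPar (LTens (LLeaf (dual_lit x, j)) Q) (plug R (LLeaf (x,i)))) (LLeaf (Bot,k))))
              (ICut (FLit (x, i)) (FLit (dual_lit x, j)) :: Gm) /\
  rewire_side P (LTens (LLeaf (dual_lit x, j)) Q) (plug R (LLeaf (x,i))) k
              (ICut (FLit (x, i)) (FLit (dual_lit x, j)) :: Gm).
Proof.
  set (Q' := LTens (LLeaf (dual_lit x, j)) Q).
  set (R' := plug R (LLeaf (x,i))).
  set (G := ICut (FLit (x, i)) (FLit (dual_lit x, j)) :: Gm).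
  set (X1 := LPar Q' (LTens R' (LLeaf (Bot,k)))).
  set (X2 := LTens (LPar Q' R') (LLeaf (Bot,k))).
  intros [L [Wf [ND [PL T]]]].
  set (h := hpath P []).
  set (K := ctx_edges P [] (NLk h) ++ seq_edges 0 G).
  set (KN := ctx_nodes P [] ++ seq_nodes 0 G).
  set (ph := phi sgR h). set (ps := phi sgRi h).
  set (a := NLk h). set (b := NLk (false::h)). set (q := NLk (false::false::h)).
  set (r := lk_root (true::false::h) R'). set (bot := NLeaf (Bot,k)).
  set (EQ := lk_edges (false::false::h) Q'). set (ER := lk_edges (true::false::h) R').
  set (QN := lk_nodes (false::false::h) Q'). set (RN := lk_nodes (true::false::h) R').
  set (M := K ++ EQ ++ ER).
  assert (Hfl : forall v : node, v <> NLk h -> (fun _ : node => false) v = false) by auto.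
  destruct (ren_sub sgR h (fun _ => false) Q' [false] [false;false] Hfl) as [RQe [RQn RQr]];
    [intros; reflexivity|discriminate|].
  destruct (ren_sub sgR h (fun _ => false) R' [false;true] [true;false] Hfl) as [RRe [RRn RRr]];
    [intros; reflexivity|discriminate|].
  cbn [app] in RQe, RQn, RQr, RRe, RRn, RRr. fold ph in RQe, RQn, RQr, RRe, RRn, RRr.
  fold EQ QN ER RN r in RQe, RQn, RQr, RRe, RRn, RRr.
  assert (Ha : ph a = a) by (apply phi_root; reflexivity).
  assert (Htau : ph (NLk (true::h)) = b).
  { change (NLk (true::h)) with (NLk ([true] ++ h)). unfold ph. rewrite phi_ext. reflexivity. }
  assert (Hb : ps b = NLk (true::h)).
  { change b with (NLk ([false] ++ h)). unfold ps. rewrite phi_ext. reflexivity. }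
  assert (Hq : ph (NLk (false::h)) = q).
  { change (NLk (false::h)) with (NLk ([false] ++ h)). unfold ph. rewrite phi_ext. reflexivity. }
  assert (Hpsph : forall v, ps (ph v) = v) by (intros; apply phi_inv, sgR_inv).
  set (E1 := map (renE ph (fun _ => false)) (pg_edges (plug P X1) G)).
  assert (PE1 : Permutation E1 ([(q,a,Some false);(b,a,Some true);(r,b,None);(bot,b,None)] ++ M)).
  { unfold E1. eapply perm_trans; [apply Permutation_map, pg_edges_frame; reflexivity|].
    rewrite map_app. fold h K. unfold ph. rewrite ren_K; auto; [|apply frameK].
    assert (LX1 : lk_edges h X1 = (NLk (false::h), a, Some false) :: (NLk (true::h), a, Some true) ::
       lk_edges (false::h) Q' ++ ((lk_root (false::true::h) R', NLk (true::h), None) ::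
       (bot, NLk (true::h), None) :: lk_edges (false::true::h) R' ++ [])) by reflexivity.
    rewrite LX1. cbn [map renE]. fold ph. rewrite map_app, RQe, app_nil_r. cbn [map renE]. rewrite RRe, RRr, Ha, Hq, Htau.
    change (ph bot) with bot. apply perm_h1. }
  Show.
    assert (PE2 : Permutation (pg_edges (plug P X2) G)
                 ([(b,a,None);(bot,a,None);(q,b,Some false);(r,b,Some true)] ++ M)).
  { eapply perm_trans; [apply pg_edges_frame; reflexivity|]. fold h K.
    assert (LX2 : lk_edges h X2 = (b, a, None) :: (bot, a, None) ::
       ((q, b, Some false) :: (r, b, Some true) :: EQ ++ ER) ++ []) by reflexivity.
    rewrite LX2. apply perm_h2. }
  set (V1 := map ph (pg_nodes (plug P X1) G)).
  assert (NX1 : map ph (lk_nodes h X1) = a :: QN ++ b :: RN ++ [bot]).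
  { change (lk_nodes h X1) with (a :: lk_nodes (false::h) Q' ++
       (NLk (true::h) :: lk_nodes (false::true::h) R' ++ [bot])).
    rewrite map_cons, map_app, map_cons, map_app, RQn, RRn, Ha, Htau. reflexivity. }
  assert (NX2 : lk_nodes h X2 = a :: (b :: QN ++ RN) ++ [bot]) by reflexivity.
  assert (I2 : incl (pg_nodes (plug P X2) G) V1).
  { intros v Hv. eapply Permutation_in in Hv; [|apply pg_nodes_frame].
    unfold V1. eapply Permutation_in; [apply Permutation_map, Permutation_sym, pg_nodes_frame|].
    rewrite map_app. fold h. unfold ph; rewrite map_phi_K; [|apply frameN]. fold ph. rewrite NX1.
    fold h in Hv. rewrite NX2 in Hv. apply in_app_or in Hv as [Hv|Hv]; apply in_or_app; [left; auto|right].
    simpl in Hv |- *. destruct Hv as [Hv|Hv]; [auto|right].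
    repeat (rewrite in_app_iff in * || simpl in * ). tauto. }
  assert (TE1 : TreeProp V1 E1).
  { eapply tree_iso; [exact Hpsph|apply Permutation_refl|apply incl_refl|exact T]. }
  assert (Fs : forall s, connected V1 (sw_edges s ([(q,a,Some false);(b,a,Some true);(r,b,None);(bot,b,None)] ++ M) ) /\ acyclic (sw_edges s ([(q,a,Some false);(b,a,Some true);(r,b,None);(bot,b,None)] ++ M))).
  { intros s. destruct (TE1 s) as [C A]. pose proof (sw_perm s _ _ PE1) as Ps. split.
    - intros u v Hu Hv. eapply walk_incl; [|apply C; auto]. intros e He; eapply Permutation_in; eauto.
    - eapply acyclic_perm; eauto. }
  assert (Hlen : forall (d : list bool) l1 l2, NLk (d ++ l1) = NLk l2 -> length l2 < length l1 -> False).
  { intros d l1 l2 E Hl. inversion E. subst. rewrite length_app in Hl. lia. }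
  assert (Hl1 : length h < length (false::h)) by (simpl; lia).
  assert (Hl2 : length (false::h) < length (false::false::h)) by (simpl; lia).
  assert (Hl3 : length (false::h) < length (true::false::h)) by (simpl; lia).
  assert (Hl4 : length h < length (false::false::h)) by (simpl; lia).
  assert (Hl5 : length h < length (true::false::h)) by (simpl; lia).
  assert (Iso : forall c p l, In (c,p,l) M -> c <> b /\ p <> b /\ p <> a).
  { intros c p l H. unfold M in H. apply in_app_or in H as [H|H].
    - apply frameK in H as [[Hc|Hc] Hp]; fold h in Hc, Hp.
      + repeat split; [exact (Hc [false])|exact (Hp [false])|exact (Hp [])].
      + repeat split; [subst c; intro E; inversion E; apply (f_equal (@length bool)) in H0; simpl in H0; lia
                      |exact (Hp [false])|exact (Hp [])].
    - apply in_app_or in H as [H|H]; apply edges_shape in H as [Hc [Hp _]];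
        repeat split; eapply sub_neq; eauto. }
  assert (Hab : a <> b) by (intro E; inversion E; apply (f_equal (@length bool)) in H0; simpl in H0; lia).
  assert (Hqb : q <> b) by (intro E; inversion E; apply (f_equal (@length bool)) in H0; simpl in H0; lia).
  assert (Hbb : bot <> b) by discriminate.
  assert (Hrb : r <> b) by (eapply sub_neq; [apply root_in|exact Hl3]).
  assert (HqQ : In q QN) by apply (root_in (false::false::h) Q').
  assert (NDX := nodup_plug _ _ ND). 
  change (lk_leaves X1) with (lk_leaves Q' ++ (lk_leaves R' ++ [(Bot,k)])) in NDX.
  assert (BQ : ~ In bot QN).
  { intros H. apply nodes_shape in H as [[l [E Hl]]|[d E]]; [|discriminate].
    inversion E; subst. eapply nodup_disj; [exact NDX|exact Hl|apply in_or_app; simpl; auto]. }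
  assert (BR : ~ In bot RN).
  { intros H. apply nodes_shape in H as [[l [E Hl]]|[d E]]; [|discriminate].
    inversion E; subst. apply NoDup_app_remove_l in NDX.
    eapply nodup_disj; [exact NDX|exact Hl|simpl; auto]. }
  assert (Kpar : forall c p l, In (c,p,l) K -> (exists z, p = NLk z /\ out h p) \/ (exists n z, p = NSq n z)).
  { intros c p l H. pose proof (frameK _ _ _ _ _ H) as [_ Hp]. fold h in Hp.
    apply in_app_or in H as [H|H]; [apply ctx_par in H as [z ->]; left; eauto|right; eapply seq_par; eauto]. }
  assert (H2Q : forall c p l, In (c,p,l) M -> In p QN -> In c QN).
  { intros c p l H Hp. unfold M in H. apply in_app_or in H as [H|H].
    - exfalso. apply Kpar in H as [[z [-> Ho]]|[n [z ->]]];
        apply nodes_shape in Hp as [[l' [E _]]|[d E]]; try discriminate.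
      apply (Ho (d ++ [false;false])). rewrite E, <- app_assoc. reflexivity.
    - apply in_app_or in H as [H|H]; apply edges_shape in H as [Hc [Hp' [d E]]]; auto.
      exfalso. subst p. eapply sub_disj; eauto. }
  assert (H2R : forall c p l, In (c,p,l) M -> In p RN -> In c RN).
  { intros c p l H Hp. unfold M in H. apply in_app_or in H as [H|H].
    - exfalso. apply Kpar in H as [[z [-> Ho]]|[n [z ->]]];
        apply nodes_shape in Hp as [[l' [E _]]|[d E]]; try discriminate.
      apply (Ho (d ++ [true;false])). rewrite E, <- app_assoc. reflexivity.
    - apply in_app_or in H as [H|H]; apply edges_shape in H as [Hc [Hp' [d E]]]; auto.
      exfalso. subst p. eapply sub_disj; eauto. }
  assert (Exj : In (NLeaf (dual_lit x, j), q, None) M).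
  { unfold M; apply in_or_app; right; apply in_or_app; left. unfold EQ, Q'. simpl. auto. }
  assert (Ecut : In (NLeaf (x, i), NSq 0 [], None) M /\ In (NLeaf (dual_lit x, j), NSq 0 [], None) M).
  { unfold M, K, G; split; apply in_or_app; left; apply in_or_app; right; simpl; auto. }
  assert (XiR : In (NLeaf (x,i)) RN).
  { apply leaf_in_nodes. unfold R'. apply in_leaves_plug. simpl; auto. }
  assert (REACH : forall s u, In u QN -> walk (sw_edges s M) bot u -> exists s', walk (sw_edges s' M) bot r).
  { intros s u Hu W.
    destruct (reach_root M (false::false::h) Q' s bot u H2Q) as [s1 W1]; auto.
    { intros e He; unfold M; apply in_or_app; right; apply in_or_app; auto. }
    assert (W2 : walk (sw_edges s1 M) bot (NLeaf (x,i))).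
    { apply walk_trans with q; [exact W1|].
      apply walk_trans with (NLeaf (dual_lit x, j)); [apply walk_sym, walk_edge, sw_none; auto|].
      apply walk_trans with (NSq 0 []); [apply walk_edge, sw_none; tauto|].
      apply walk_sym, walk_edge, sw_none; tauto. }
    destruct (reach_root M (true::false::h) R' s1 bot (NLeaf (x,i)) H2R) as [s2 W3]; auto.
    { intros e He; unfold M; apply in_or_app; right; apply in_or_app; auto. }
    exists s2; exact W3. }
  assert (HaV : In a V1) by (apply I2; eapply Permutation_in; [apply Permutation_sym, pg_nodes_frame|];
     apply in_or_app; right; fold h; rewrite NX2; simpl; auto).
  assert (HrV : In r V1) by (apply I2; eapply Permutation_in; [apply Permutation_sym, pg_nodes_frame|];
     apply in_or_app; right; fold h; rewrite NX2; right; apply in_or_app; left; right; apply in_or_app; right;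
     apply (root_in (true::false::h) R')).
  destruct (surgery V1 (pg_nodes (plug P X2) G) M a b q r bot QN Fs Iso Hab Hqb Hbb Hrb HqQ REACH I2 HrV HaV)
    as [S1 S2].
  split.
  - split; [|split; [exact Wf|split; [|split]]].
    + apply (linking_plug P X1 X2); [reflexivity| |exact L].
      intros HL. apply par_inv in HL as [HQ HT].
      assert (HR : is_linking R').
      { inversion HT; subst; auto.
        match goal with H : is_linking (LLeaf (Bot, _)) |- _ => inversion H end. }
      constructor. constructor; auto.
    + eapply Permutation_NoDup; [|exact ND]. apply leaves_plug.
      unfold X1, X2. cbn [lk_leaves]. rewrite <- !app_assoc. reflexivity.
    + eapply Permutation_trans; [|exact PL]. apply leaves_plug.
      unfold X1, X2. cbn [lk_leaves]. rewrite <- !app_assoc. reflexivity.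
    + intros s. destruct (S1 s) as [C A]. pose proof (sw_perm s _ _ PE2) as Ps. split.
      * intros u v Hu Hv. eapply walk_incl; [|apply C; auto].
        intros e He; eapply Permutation_in; [apply Permutation_sym; exact Ps|exact He].
      * eapply acyclic_perm; [apply Permutation_sym; exact Ps|exact A].
  - intros s u Hu W. fold h in Hu. fold X1 in W.
    set (t := fun v => s (ps v)).
    apply (walk_map ph) in W. change (ph (NLeaf (Bot,k))) with bot in W.
    apply (S2 t (ph u)); [rewrite <- RQn; apply in_map; exact Hu|].
    eapply walk_incl; [|exact W].
    intros [y z] Hyz. apply in_map_iff in Hyz as [[c p] [E Hcp]].
    unfold pmap in E; simpl in E; inversion E; subst y z; clear E.
    assert (Hex : exists l, In (c,p,l) (pg_edges (plug P X1) G) /\ kept s (c,p,l) = true /\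
                   (c,p,l) <> (bot, NLk (true::h), None)).
    { unfold ext_sw_edges in Hcp. apply in_app_or in Hcp as [Hcp|Hcp];
        apply sw_in in Hcp as [l [Hin Hk]]; exists l.
      - apply filter_In in Hin as [Hin Hnb]. split; [unfold pg_edges; apply in_or_app; auto|split; auto].
        intros E; inversion E; subst. cbn -[node_eq_dec] in Hnb.
        match type of Hnb with context [node_eq_dec ?u ?v] => destruct (node_eq_dec u v) end; [discriminate|]. apply n; reflexivity.
      - split; [unfold pg_edges; apply in_or_app; auto|split; auto].
        apply seq_par in Hin as [n [z ->]]. intros E; inversion E. }
    destruct Hex as [l [Hin [Hk Hne]]].
    apply sw_in. exists l.
    assert (Hk' : kept t (ph c, ph p, l) = true).
    { change (ph c, ph p, l) with (renE ph (fun _ => false) (c,p,l)). rewrite kept_ren.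
      rewrite kept_agree with (s := s); auto. simpl. unfold t. rewrite Hpsph. reflexivity. }
    split; auto.
    assert (Hin1 : In (ph c, ph p, l) E1).
    { unfold E1. change (ph c, ph p, l) with (renE ph (fun _ => false) (c,p,l)). apply in_map; auto. }
    eapply Permutation_in in Hin1; [|exact PE1].
    apply in_app_or in Hin1 as [Hin1|Hin1]; [|apply in_or_app; right; auto].
    apply in_or_app; left.
    destruct Hin1 as [E|[E|[E|[E|[]]]]]; [left; auto|right; left; auto|right; right; left; auto|].
    exfalso. inversion E. apply Hne.
    rewrite <- (Hpsph c), <- (Hpsph p), <- H0, <- H1, Hb, <- H2. reflexivity.
Qed.

Fixpoint ccomp (C D : ctx) : ctx :=
  match C with
  | Hole => D
  | CTensL C' B => CTensL (ccomp C' D) B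
  | CTensR A C' => CTensR A (ccomp C' D)
  | CParL C' B => CParL (ccomp C' D) B
  | CParR A C' => CParR A (ccomp C' D)
  end.

Lemma plug_ccomp C D X : plug (ccomp C D) X = plug C (plug D X).
Proof. induction C; simpl; f_equal; auto. Qed.

Theorem lemma1p20 (P R : ctx) (Q : lk) (x : lit) (i j k : nat) (Gamma : sequent) :
  atom_or_unit x ->
  proof_graph
    (plug P (LPar (LTens (LLeaf (Bot, k)) (plug R (LLeaf (x, i))))
                  (LTens (LLeaf (dual_lit x, j)) Q)))
    (ICut (FLit (x, i)) (FLit (dual_lit x, j)) :: Gamma) ->
  pg_equiv
    (plug P (LPar (LTens (LLeaf (Bot, k)) (plug R (LLeaf (x, i))))
                  (LTens (LLeaf (dual_lit x, j)) Q)),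
     ICut (FLit (x, i)) (FLit (dual_lit x, j)) :: Gamma)
    (plug P (LTens (LLeaf (Bot, k))
                   (LPar (plug R (LLeaf (x, i))) (LTens (LLeaf (dual_lit x, j)) Q))),
     ICut (FLit (x, i)) (FLit (dual_lit x, j)) :: Gamma).
Proof.
  intros _ H0.
  set (G := ICut (FLit (x, i)) (FLit (dual_lit x, j)) :: Gamma) in *.
  set (Bt := LLeaf (Bot, k)) in *.
  set (R' := plug R (LLeaf (x, i))) in *.
  set (Q' := LTens (LLeaf (dual_lit x, j)) Q) in *.
  assert (H1 : proof_graph (plug P (LPar (LTens R' Bt) Q')) G).
  { pose proof (pg_swap (ccomp P (CParL Hole Q')) G Bt R' false) as S.
    rewrite !plug_ccomp in S. apply S, H0. }
  assert (H2 : proof_graph (plug P (LPar Q' (LTens R' Bt))) G).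
  { exact (pg_swap P G (LTens R' Bt) Q' true H1). }
  destruct (rewire_ok P R Q x i j k Gamma H2) as [H3 Side].
  fold G Bt R' Q' in H3, Side.
  assert (H4 : proof_graph (plug P (LTens (LPar R' Q') Bt)) G).
  { pose proof (pg_swap (ccomp P (CTensL Hole Bt)) G Q' R' true) as S.
    rewrite !plug_ccomp in S. apply S, H3. }
  assert (H5 : proof_graph (plug P (LTens Bt (LPar R' Q'))) G).
  { exact (pg_swap P G (LPar R' Q') Bt false H4). }
  apply rst_trans with (plug P (LPar (LTens R' Bt) Q'), G).
  { apply rst_step. split; [reflexivity|split; [exact H0|split; [exact H1|]]].
    pose proof (st_tensC G (ccomp P (CParL Hole Q')) Bt R') as S.
    rewrite !plug_ccomp in S. exact S. }
  apply rst_trans with (plug P (LPar Q' (LTens R' Bt)), G).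
  { apply rst_step. split; [reflexivity|split; [exact H1|split; [exact H2|]]].
    apply st_parC. }
  apply rst_trans with (plug P (LTens (LPar Q' R') Bt), G).
  { apply rst_step. split; [reflexivity|split; [exact H2|split; [exact H3|]]].
    apply st_rewire. exact Side. }
  apply rst_trans with (plug P (LTens (LPar R' Q') Bt), G).
  { apply rst_step. split; [reflexivity|split; [exact H3|split; [exact H4|]]].
    pose proof (st_parC G (ccomp P (CTensL Hole Bt)) Q' R') as S.
    rewrite !plug_ccomp in S. exact S. }
  apply rst_step. split; [reflexivity|split; [exact H4|split; [exact H5|]]].
  apply st_tensC.
Qed.
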